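(* Let $n\ge 3$. Any generating set of the semigroup $\mathbf{W}^{\le 5}_{\mathrm{bf}}(n)$ has at least $(n-2)!$ elements.
   Context: Let $Q=\{0,\dots,n-1\}$ and $Q_M=\{1,\dots,n-3\}$. Transformations of $Q$ act on the right, $q(st)=(qs)t$. Let $\mathbf{B}_{\mathrm{bf}}(n)$ be the set of all transformations $t$ of $Q$ with $0\notin Qt$, $(n-1)t=n-1$, $(n-2)t=n-1$, and for all $j\ge1$, either $0t^j=n-1$ or $0t^j\ne qt^j$ for all $0<q<n-1$. Then $\mathbf{W}^{\le 5}_{\mathrm{bf}}(n)=\{t\in\mathbf{B}_{\mathrm{bf}}(n)\mid$ for all distinct $p,q\in Q_M$, $pt=qt=n-1$ or $pt\ne qt\}$, a semigroup under composition. *)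

(* Defs.v *)
From mathcomp Require Import all_boot.
Set Implicit Arguments. Unset Strict Implicit. Unset Printing Implicit Defensive.

Definition trans (n : nat) := {ffun 'I_n -> 'I_n}.

(* Right action: q (s t) = (q s) t, i.e. apply s first, then t. *)
Definition tmul (n : nat) (s t : trans n) : trans n := [ffun q => t (s q)].

Definition tpow_app (n : nat) (t : trans n) (j : nat) (q : 'I_n) : 'I_n :=
  iter j t q.

Definition in_Bbf (n : nat) (t : trans n) : Prop :=
  (forall q : 'I_n, val (t q) <> 0) /\
  (forall q : 'I_n, val q = n.-1 -> val (t q) = n.-1) /\
  (forall q : 'I_n, val q = n.-2 -> val (t q) = n.-1) /\
  (forall (j : nat) (p : 'I_n), 1 <= j -> val p = 0 ->
     val (tpow_app t j p) = n.-1 \/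
     (forall q : 'I_n, 0 < val q < n.-1 -> tpow_app t j p <> tpow_app t j q)).

Definition in_QM (n : nat) (q : 'I_n) : bool := (1 <= val q) && (val q <= n - 3).

Definition in_W5bf (n : nat) (t : trans n) : Prop :=
  in_Bbf t /\
  (forall p q : 'I_n, in_QM p -> in_QM q -> p <> q ->
     (val (t p) = n.-1 /\ val (t q) = n.-1) \/ t p <> t q).

(* Product g1 g2 ... gk of a nonempty list (g1 acts first). *)
Definition tprod (n : nat) (g : trans n) (s : seq (trans n)) : trans n :=
  foldl (@tmul n) g s.

Definition generates_W5bf (n : nat) (G : {set trans n}) : Prop :=
  (forall g, g \in G -> in_W5bf g) /\
  (forall t : trans n, in_W5bf t ->
     exists (g : trans n) (s : seq (trans n)),
       g \in G /\ all (fun x => x \in G) s /\ t = tprod g s).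

(* Main.v *)
Require Import Defs.
From mathcomp Require Import all_boot all_fingroup.
From mathcomp Require Import zify.
Set Implicit Arguments. Unset Strict Implicit. Unset Printing Implicit Defensive.

Section Aux.
Variable k : nat.

Definition fp (p : {perm 'I_k.+1}) : trans k.+3 :=
  [ffun q : 'I_k.+3 => if val q < k.+1 then inord (p (inord (val q))).+1
                       else inord k.+2].

Lemma fpE p (q : 'I_k.+3) :
  val (fp p q) = if val q < k.+1 then (p (inord (val q))).+1 else k.+2.
Proof.
rewrite ffunE; case: ifP => _ /=; rewrite inordK //.
have := ltn_ord (p (inord q)); lia.
Qed.

Lemma fp_inj_pt p (x y : 'I_k.+3) : fp p x = fp p y -> x = y \/ val (fp p x) = k.+2.
Proof.
move=> e; have e' := congr1 (@nat_of_ord _) e; rewrite !fpE in e'.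
rewrite fpE.
case: ifP e' => hx; case: ifP => hy e'.
- left; have : p (inord x) = p (inord y) by apply: val_inj; case: e'.
  move/perm_inj => /(congr1 (@nat_of_ord _)); rewrite !inordK // => h; exact: val_inj.
- have := ltn_ord (p (inord x)); lia.
- have := ltn_ord (p (inord y)); lia.
- by right.
Qed.

Lemma fp_iter p j (x y : 'I_k.+3) :
  iter j (fp p) x = iter j (fp p) y -> x = y \/ val (iter j (fp p) x) = k.+2.
Proof.
elim: j => [|j IH] /=; first by left.
move=> e; case: (fp_inj_pt e) => [e1|->]; last by right.
case: (IH e1) => [->|h]; first by left.
by right; rewrite fpE h; case: ifP => //; lia.
Qed.

Lemma fp_W p : in_W5bf (fp p).
Proof.
split; [split; [|split; [|split]]|].
- move=> q; rewrite fpE; by case: ifP.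
- move=> q /= hq; rewrite fpE /= hq; by case: ifP => //; lia.
- move=> q /= hq; rewrite fpE /= hq; by case: ifP => //; lia.
- move=> j p0 _ h0.
  case: (boolP (val (tpow_app (fp p) j p0) == k.+2)) => [/eqP h|h]; first by left.
  right=> q hq e; case: (fp_iter e) => [e1|h2].
  + by move: hq; rewrite -e1 h0.
  + by rewrite /tpow_app h2 eqxx in h.
- move=> a b; rewrite /in_QM => /andP [_ ha] /andP [_ hb] ne; right => e.
  case: (fp_inj_pt e) => // h; move: h ha; rewrite fpE /=; case: ifP => hlt h ha;
  [move: (ltn_ord (p (inord a))); rewrite h; lia | move: hlt ha; lia].
Qed.

Lemma fp_inj : injective fp.
Proof.
move=> p1 p2 e; apply/permP => i.
have := congr1 (fun f : trans k.+3 => val (f (inord i))) e => /=.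
rewrite !fpE /= inordK; last by have := ltn_ord i; lia.
rewrite ltn_ord inord_val; by case=> h; apply: val_inj.
Qed.

Lemma tprod_nz (G : {set trans k.+3}) (g : trans k.+3) s :
  (forall h, h \in G -> in_W5bf h) ->
  (forall q, val (g q) <> 0) -> all (fun x => x \in G) s ->
  forall q, val (tprod g s q) <> 0.
Proof.
move=> HG; elim: s g => [|h s IH] g hg //= /andP [hh hs].
apply: IH hs => q; rewrite ffunE.
by case: (HG h hh) => [[H0 _] _]; apply: H0.
Qed.

Lemma fp_in (G : {set trans k.+3}) p : generates_W5bf G -> fp p \in G.
Proof.
case=> HG Hgen; case: (Hgen _ (fp_W p)) => g [s [gG [sG e]]].
case: (lastP s) sG e => [|s' x] sG e; first by rewrite e.
exfalso.
rewrite all_rcons in sG; case/andP: sG => xG s'G.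
rewrite /tprod foldl_rcons -/(tprod g s') in e.
set P := tprod g s' in e.
have Pnz : forall q, val (P q) <> 0.
  apply: (@tprod_nz G g s' HG _ s'G); by case: (HG g gG) => [[H0 _] _].
case: (HG x xG) => [[_ [Hx1 [Hx2 _]]] _].
have eq q : fp p q = x (P q) by rewrite e ffunE.
have bnd (i : 'I_k.+1) : 0 < val (P (inord i)) <= k.
  have hi : nat_of_ord (inord i : 'I_k.+3) < k.+1 by rewrite inordK //; have := ltn_ord i; lia.
  have v := fpE p (inord i); rewrite hi in v.
  have vlt : val (fp p (inord i)) < k.+2 by rewrite v; case: (p _) => /= m hm; lia.
  have := Pnz (inord i); have := ltn_ord (P (inord i)).
  case: (ltnP (val (P (inord i))) k.+1) => h1 h2 h3; rewrite /= in h1 h2 h3 *; first lia.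
  rewrite eq in vlt.
  have : nat_of_ord (x (P (inord i))) = k.+2.
    have [h4|h4] : nat_of_ord (P (inord i)) = k.+2 \/ nat_of_ord (P (inord i)) = k.+1 by lia.
    by apply: Hx1. by apply: Hx2.
  rewrite /= in vlt; lia.
have hb (i : 'I_k.+1) : (nat_of_ord (P (inord i))).-1 < k.
  have := bnd i; rewrite /=; lia.
pose hf (i : 'I_k.+1) : 'I_k := Ordinal (hb i).
have hinj : injective hf.
  move=> i j; rewrite /hf => /(congr1 (@nat_of_ord _)) /= h.
  have bi := bnd i; have bj := bnd j; rewrite /= in bi bj.
  have hP : P (inord i) = P (inord j) by apply: val_inj => /=; lia.
  have : fp p (inord i) = fp p (inord j) by rewrite !eq hP.
  move/(congr1 (@nat_of_ord _)); rewrite !fpE /= !inordK; try (have := ltn_ord i; have := ltn_ord j; lia).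
  have li := ltn_ord i; have lj := ltn_ord j.
  rewrite li lj !inord_val => -[] h0; apply: (@perm_inj _ p); exact: val_inj.
have := @leq_card _ _ hf hinj; rewrite !card_ord; lia.
Qed.

End Aux.

Theorem mainTheorem10 (n : nat) (G : {set trans n}) :
  3 <= n -> generates_W5bf G -> (n - 2)`! <= #|G|.
Proof.
case: n G => [|[|[|k]]] G //= _ HG.
have -> : k.+3 - 2 = k.+1 by lia.
have H : [set fp p | p : {perm 'I_k.+1}] \subset G.
  by apply/subsetP => t /imsetP [p _ ->]; exact: fp_in.
have := subset_leq_card H; rewrite card_imset; last exact: (@fp_inj k).
move=> h; apply: leq_trans h; exact: (eq_leq (esym (card_Sn k.+1))).
Qed.
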